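(* Let $u$ and $v$ be non-adjacent vertices in a prime $\overline{P_5}$-free graph $G$. Then either $N(u)\cap N(v)$ is a clique, or there exist a vertex $w\in V(G)\setminus (N(u)\cup N(v)\cup\{u,v\})$ and a set $A\subseteq N(u)\cap N(v)$ such that $G[A]$ is anticonnected and $w$ is mixed on $A$.
   Context: All graphs are finite and simple. $N(x)$ is the set of neighbors of $x$. $P_5$ is the path on five vertices and $\overline{P_5}$ its complement; $G$ is $H$-free if it has no induced subgraph isomorphic to $H$. A graph is anticonnected if its complement is connected. A vertex $b\notin X$ is mixed on $X$ if it has both a neighbor and a non-neighbor in $X$. A homogeneous set is a set $X\subseteq V(G)$ with $1<|X|<|V(G)|$ such that no vertex outside $X$ is mixed on $X$. $G$ is prime if $|V(G)|\ge4$ and has no homogeneous set. *)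

(* Defs.v *)
From mathcomp Require Import all_boot.
Set Implicit Arguments. Unset Strict Implicit. Unset Printing Implicit Defensive.

Definition simple_graph (T : finType) (adj : rel T) : Prop :=
  symmetric adj /\ irreflexive adj.

Definition nbhd (T : finType) (adj : rel T) (x : T) : {set T} := [set y | adj x y].

Definition p5_adj (i j : 'I_5) : bool := (i.+1 == j) || (j.+1 == i).

Definition p5bar_adj (i j : 'I_5) : bool := (i != j) && ~~ p5_adj i j.

Definition has_induced (T : finType) (adj : rel T) (n : nat) (hadj : rel 'I_n) : Prop :=
  exists f : 'I_n -> T, injective f /\ forall i j, i != j -> adj (f i) (f j) = hadj i j.

Definition P5bar_free (T : finType) (adj : rel T) : Prop :=
  ~ has_induced adj p5bar_adj.

Definition mixed (T : finType) (adj : rel T) (b : T) (X : {set T}) : Prop :=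
  b \notin X /\ (exists2 x, x \in X & adj b x) /\ (exists2 y, y \in X & ~~ adj b y).

Definition homogeneous (T : finType) (adj : rel T) (X : {set T}) : Prop :=
  1 < #|X| < #|T| /\ forall b, b \notin X -> ~ mixed adj b X.

Definition prime_graph (T : finType) (adj : rel T) : Prop :=
  4 <= #|T| /\ forall X : {set T}, ~ homogeneous adj X.

Definition is_clique (T : finType) (adj : rel T) (A : {set T}) : Prop :=
  forall x y, x \in A -> y \in A -> x != y -> adj x y.

Definition coadj_in (T : finType) (adj : rel T) (A : {set T}) : rel T :=
  fun x y => [&& x \in A, y \in A, x != y & ~~ adj x y].

Definition anticonnected (T : finType) (adj : rel T) (A : {set T}) : Prop :=
  A != set0 /\ forall x y, x \in A -> y \in A -> connect (coadj_in adj A) x y.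

(* Main.v *)
Require Import Defs.
From mathcomp Require Import all_boot.
From Stdlib Require Import Classical.

Lemma p5bar_found (T : finType) (adj : rel T) (t0 t1 t2 t3 t4 : T) :
  symmetric adj -> irreflexive adj ->
  t0 != t1 -> t1 != t2 -> t2 != t3 -> t3 != t4 ->
  adj t0 t1 = false -> adj t0 t2 -> adj t0 t3 -> adj t0 t4 ->
  adj t1 t2 = false -> adj t1 t3 -> adj t1 t4 ->
  adj t2 t3 = false -> adj t2 t4 -> adj t3 t4 = false ->
  has_induced adj p5bar_adj.
Proof.
move=> sy irr d01 d12 d23 d34 a01 a02 a03 a04 a12 a13 a14 a23 a24 a34.
have ne : forall x y, adj x y -> x != y.
  by move=> x y H; apply/eqP => E; move: H; rewrite E irr.
have d02 := ne _ _ a02; have d03 := ne _ _ a03; have d04 := ne _ _ a04.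
have d13 := ne _ _ a13; have d14 := ne _ _ a14; have d24 := ne _ _ a24.
have b10 : adj t1 t0 = false by rewrite sy.
have b20 : adj t2 t0 by rewrite sy.
have b30 : adj t3 t0 by rewrite sy.
have b40 : adj t4 t0 by rewrite sy.
have b21 : adj t2 t1 = false by rewrite sy.
have b31 : adj t3 t1 by rewrite sy.
have b41 : adj t4 t1 by rewrite sy.
have b32 : adj t3 t2 = false by rewrite sy.
have b42 : adj t4 t2 by rewrite sy.
have b43 : adj t4 t3 = false by rewrite sy.
exists (fun i : 'I_5 => nth t0 [:: t0; t1; t2; t3; t4] i); split.
  move=> [[|[|[|[|[|i]]]]] Hi] [[|[|[|[|[|j]]]]] Hj] /= E.
  all: first [by apply: val_inj | exfalso; move/eqP: E; apply/negP; first [by [] | by rewrite eq_sym] | idtac].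
move=> [[|[|[|[|[|i]]]]] Hi] [[|[|[|[|[|j]]]]] Hj] //= _.
all: rewrite /p5bar_adj /p5_adj /=; by [].
Qed.
Lemma path_switch (T : finType) (r : rel T) (P : pred T) p a :
  P a -> ~~ P (last a p) -> path r a p -> exists x y, [/\ r x y, P x & ~~ P y].
Proof.
elim: p a => [|c p IH] a /= Pa; first by rewrite Pa.
move=> Hl /andP [rac pth]; case Pc: (P c).
  exact: IH Pc Hl pth.
by exists a, c; rewrite Pc.
Qed.

Theorem lemma2p8 (T : finType) (adj : rel T) (u v : T) :
  simple_graph adj -> prime_graph adj -> P5bar_free adj ->
  u != v -> ~~ adj u v ->
  is_clique adj (nbhd adj u :&: nbhd adj v) \/
  exists w : T, exists A : {set T},
    w \notin (nbhd adj u :|: nbhd adj v :|: [set u; v]) /\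
    A \subset (nbhd adj u :&: nbhd adj v) /\
    anticonnected adj A /\ mixed adj w A.
Proof.
move=> [sy irr] [card4 noHom] noP5 neuv nadjuv.
set C := nbhd adj u :&: nbhd adj v.
have inC : forall z, (z \in C) = adj u z && adj v z by move=> z; rewrite !inE.
case: (classic (is_clique adj C)) => [|ncl]; [by left | right].
have [x [y [xC yC nxy axy]]] : exists x y, [/\ x \in C, y \in C, x != y & ~~ adj x y].
  apply: NNPP => H; apply: ncl => x y Hx Hy Hxy; apply/negPn/negP => Hn.
  by apply: H; exists x, y.
set e := coadj_in adj C.
set A := [set z | connect e x z].
have eC : forall a b, e a b -> (a \in C) && (b \in C).
  by move=> a b /and4P [-> -> _ _].
have pathC : forall p a, a \in C -> path e a p -> last a p \in C.
  elim=> [|c p IH] a //= Ha /andP [eac pth]; apply: IH pth.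
  by case/andP: (eC _ _ eac).
have AsubC : A \subset C.
  apply/subsetP => z; rewrite inE => /connectP [p pth ->]; exact: pathC.
have xA : x \in A by rewrite inE connect0.
have yA : y \in A by rewrite inE connect1 // /e /coadj_in xC yC nxy.
have pathA : forall p a, a \in A -> path e a p -> connect (coadj_in adj A) a (last a p).
  elim=> [|c p IH] a Ha /=; first by rewrite connect0.
  move=> /andP [eac pth].
  have Hc : c \in A.
    by move: Ha; rewrite !inE => Ha; exact: connect_trans Ha (connect1 eac).
  apply: connect_trans (connect1 _) (IH c Hc pth).
  by move: eac => /and4P [_ _ H1 H2]; rewrite /coadj_in Ha Hc H1 H2.
have symA : symmetric (coadj_in adj A).
  move=> a b; rewrite /coadj_in eq_sym sy.
  by case: (a \in A); case: (b \in A).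
have acA : anticonnected adj A.
  split; first by apply/set0Pn; exists x.
  have H : forall a, a \in A -> connect (coadj_in adj A) x a.
    move=> a Ha; move: (Ha); rewrite inE => /connectP [p pth ->].
    exact: pathA.
  move=> a b Ha Hb; apply: connect_trans (H b Hb).
  by rewrite (sym_connect_sym symA); apply: H.
have uA : u \notin A.
  apply/negP => /(subsetP AsubC); by rewrite inC irr.
have [z [nzA [_ [[a1 a1A za1] [b1 b1A zb1]]]]] : exists z, z \notin A /\ mixed adj z A.
  apply: NNPP => H; apply: (noHom A); split.
    apply/andP; split.
      by apply/card_gt1P; exists x, y.
    rewrite -cardsT; apply: proper_card; rewrite properT.
    by apply/eqP => E; move: uA; rewrite E inE.
  move=> b Hb Hm; apply: H; by exists b.
have [a [b [ab za zb]]] : exists a b, [/\ coadj_in adj A a b, adj z a & ~~ adj z b].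
  have := (proj2 acA) a1 b1 a1A b1A => /connectP [p pth Eb].
  apply: (@path_switch _ _ (adj z) p a1 za1) => //; by rewrite -Eb.
move: ab => /and4P [aA bA nab nadjab].
have aC := subsetP AsubC a aA; have bC := subsetP AsubC b bA.
move: (aC) (bC); rewrite !inC => /andP [ua va] /andP [ub vb].
suff Hz : z \notin (nbhd adj u :|: nbhd adj v :|: [set u; v]).
  by exists z, A; split; [exact Hz | split; [exact AsubC | split; [exact acA | split; [exact nzA | split; [exists a | exists b]]]]].
have nza : z != a by apply/eqP => E; move: nzA; rewrite E aA.
have nzb : z != b by apply/eqP => E; move: nzA; rewrite E bA.
have nzu : z != u by apply/eqP => E; move: zb; rewrite E ub.
have nzv : z != v by apply/eqP => E; move: zb; rewrite E vb.
rewrite !inE; idtac.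
case uz: (adj u z); case vz: (adj v z) => //=; last by rewrite negb_or nzu nzv.
- have zC : z \in C by rewrite inC uz vz.
  have ebz : e b z by rewrite /e /coadj_in bC zC eq_sym nzb sy.
  exfalso; move: nzA bA; rewrite !inE => /negP nzA bA; apply: nzA.
  exact: connect_trans bA (connect1 ebz).
- exfalso; apply: noP5; apply: (@p5bar_found _ _ a b z v u) => //;
  first [by [] | by rewrite eq_sym | by apply/negbTE | by rewrite sy
    | by rewrite sy (negbTE zb) | by rewrite sy (negbTE nadjuv) | by rewrite sy vz | by rewrite sy uz].
- exfalso; apply: noP5; apply: (@p5bar_found _ _ a b z u v) => //;
  first [by [] | by rewrite eq_sym | by apply/negbTE | by rewrite sy
    | by rewrite sy (negbTE zb) | by rewrite (negbTE nadjuv) | by rewrite sy vz | by rewrite sy uz].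
Qed.
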